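(* Let $n\ge2$ be an integer and $\xi\in\mathbb{R}$. For every algebraic number $\alpha$ of degree $n$ with conjugates $\alpha_1,\dots,\alpha_n$, one has \[ \max_{1\le i\le n} |\xi-\alpha_i| \ge \tfrac12 H(\alpha)^{-2/n}. \]
   Context: The height $H(\alpha)$ of an algebraic number $\alpha\in\mathbb{C}$ is the largest absolute value of the coefficients of its irreducible (minimal) polynomial in $\mathbb{Z}[T]$. The conjugates of $\alpha$ are the roots of this polynomial. *)

(* Defs.v *)
From HB Require Import structures.
From mathcomp Require Import all_boot all_order all_algebra.
Set Implicit Arguments. Unset Strict Implicit. Unset Printing Implicit Defensive.
Import Order.TTheory GRing.Theory Num.Theory.
Local Open Scope ring_scope.

(* p : {poly int} is the minimal polynomial of alpha in Z[T]:
   irreducible in Z[T] (= primitive and irreducible over Q) and alpha is a root. *)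
Definition minpolyZ (C : numClosedFieldType) (p : {poly int}) (alpha : C) : Prop :=
  [/\ `|zcontents p| = 1,
      irreducible_poly (map_poly (intr : int -> rat) p)
    & root (map_poly (intr : int -> C) p) alpha].

Definition heightZ (p : {poly int}) : int :=
  \big[Num.max/0]_(i < size p) `|p`_i|.

(* Main.v *)
Require Import Defs.
From HB Require Import structures.
From mathcomp Require Import all_boot all_order all_algebra.
From mathcomp Require Import all_field.
From Stdlib Require Import Lia.
Import Order.TTheory GRing.Theory Num.Theory.
Local Open Scope ring_scope.

Lemma split_l m n (i : 'I_m) : split (lshift n i) = inl i.
Proof. exact: (unsplitK (inl _ i)). Qed.
Lemma split_r m n (i : 'I_n) : split (rshift m i) = inr i.
Proof. exact: (unsplitK (inr _ i)). Qed.

Lemma sum_shift (F : fieldType) (N k : nat) (s : {poly F}) (x : F) :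
  (size s + k <= N)%N ->
  \sum_(j < N) (s`_(j - k) *+ (k <= j)) * x ^+ j = x ^+ k * s.[x].
Proof.
move=> hs.
have -> : x ^+ k * s.[x] = ('X^k * s).[x] by rewrite hornerM hornerXn.
rewrite (@horner_coef_wide _ N); last first.
  have [->|s0] := eqVneq s 0; first by rewrite mulr0 size_poly0.
  by rewrite mulrC size_mulXn // addnC.
apply: eq_bigr => j _; rewrite coefXnM; congr (_ * _).
by case: ltnP => h /=; rewrite ?mulr0n ?mulr1n.
Qed.
Lemma sylv_det (F : fieldType) (n m : nat) (S : 'M[F]_(n + m)) (P Q : {poly F})
    (beta : 'I_n -> F) :
  size P = n.+1 -> (size Q <= m.+1)%N ->
  (forall i j, S i j = match split i with
      | inl k => Q`_(j - k) *+ (k <= j) | inr k => P`_(j - k) *+ (k <= j) end) ->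
  (forall i, root P (beta i)) ->
  \det S * \det (Vandermonde n (\row_i beta i)) =
  \det (Vandermonde n (\row_i beta i)) * (\prod_i Q.[beta i]) * lead_coef P ^+ m.
Proof.
move=> hP hQ hS hroot.
pose U : 'M[F]_(n + m) := \matrix_(j, c) match split c with
   | inl i => beta i ^+ j | inr t => ((j : nat) == n + t)%N%:R end.
set V := Vandermonde n _.
have detU : \det U = \det V.
  rewrite -[U]submxK.
  have -> : ursubmx U = 0.
    apply/matrixP => j t; rewrite !mxE split_r.
    by rewrite /= (ltn_eqF (leq_trans (ltn_ord j) (leq_addr _ _))).

  rewrite det_lblock.
  have -> : drsubmx U = 1%:M.
    apply/matrixP => j t; rewrite !mxE split_r /= eqn_add2l.
    by [].
  rewrite det1 mulr1; congr (\det _); apply/matrixP => j i.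
  by rewrite !mxE split_l.
rewrite -detU -det_mulmx -[S *m U]submxK.
have -> : dlsubmx (S *m U) = 0.
  apply/matrixP => k i; rewrite !mxE.
  under eq_bigr => j _ do rewrite hS split_r mxE split_l.
  rewrite sum_shift ?(rootP (hroot i)) ?mulr0 //.
  by rewrite hP addSn -addnS leq_add2l.
rewrite det_ublock; congr (_ * _).
  have -> : ulsubmx (S *m U) = V *m diag_mx (\row_i Q.[beta i]).
    apply/matrixP => k i; rewrite mul_mx_diag !mxE.
    under eq_bigr => j _ do rewrite hS split_l mxE split_l.
    rewrite sum_shift ?mxE //.
    by rewrite (leq_trans (leq_add hQ (leqnn k))) // addSn -addnS [(n + m)%N]addnC leq_add2l.
  by rewrite det_mulmx det_diag detU; congr (_ * _); apply: eq_bigr => i _; rewrite mxE.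
rewrite det_trig.
  rewrite -[m in lead_coef P ^+ m]card_ord -prodr_const; apply: eq_bigr => t _.
  rewrite !mxE.
  rewrite (bigD1 (rshift n t)) //= big1 ?addr0.
    rewrite hS split_r mxE split_r eqxx /= mulr1 addnK leq_addl mulr1n.
    by rewrite lead_coefE hP.
  move=> j hj; rewrite mxE split_r.
  case: eqP => [hjt|]; last by rewrite mulr0.
  by case/eqP: hj; apply: val_inj.
apply/forallP => k; apply/forallP => t; apply/implyP => hkt.
rewrite !mxE.
rewrite (bigD1 (rshift n t)) //= big1 ?addr0.
  rewrite hS split_r mxE split_r eqxx /= mulr1.
  rewrite nth_default ?mul0rn // hP.
  by rewrite -addnBA ?(ltnW hkt) // -{1}[n]addn0 ltn_add2l subn_gt0.
move=> j hj; rewrite mxE split_r.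
case: eqP => [hjt|]; last by rewrite mulr0.
by case/eqP: hj; apply: val_inj.
Qed.
Lemma deriv_root (F : fieldType) n (a : F) (beta : 'I_n -> F) (i : 'I_n) :
  (a *: \prod_j ('X - (beta j)%:P))^`().[beta i] =
  a * \prod_(j | j != i) (beta i - beta j).
Proof.
rewrite (bigD1 i) //= derivZ derivM derivXsubC mul1r hornerZ hornerD hornerM.
rewrite hornerXsubC subrr mul0r addr0 horner_prod; congr (_ * _).
by apply: eq_bigr => j _; rewrite hornerXsubC.
Qed.
Lemma size_derivZ (p : {poly int}) : (0 < size p)%N -> size p^`() = (size p).-1.
Proof.
move=> hp; apply/eqP; rewrite eqn_leq; apply/andP; split.
  have [->|p0] := eqVneq p 0; first by rewrite deriv0 size_poly0.
  by rewrite -ltnS prednK // lt_size_deriv.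
case hs: (size p) hp => [|[|M]] // _.
rewrite /= ltnNge; apply/negP => /leq_sizeP /(_ M (leqnn M)) /eqP.
rewrite coef_deriv mulrn_eq0 /=.
have -> : p`_M.+1 = lead_coef p by rewrite lead_coefE hs.
by rewrite lead_coef_eq0 -size_poly_eq0 hs.
Qed.

Lemma lead_dvd_high (p : {poly int}) i : ((size p).-1 <= i)%N -> (lead_coef p %| p`_i)%Z.
Proof.
move=> hi; have [e|ne] := eqVneq i (size p).-1; first by rewrite e -lead_coefE dvdzz.
rewrite nth_default ?dvdz0 //.
have [->|p0] := eqVneq p 0; first by rewrite size_poly0.
have hp0 : (0 < size p)%N by rewrite size_poly_gt0.
by rewrite -(prednK hp0) ltn_neqAle eq_sym ne hi.
Qed.

Lemma dvdz_mulrn (d x : int) n : (d %| x)%Z -> (d %| x *+ n)%Z.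
Proof. by move=> h; rewrite -mulr_natr; apply: dvdz_mulr. Qed.

Lemma res_dvd (p : {poly int}) : (2 < size p)%N ->
  (lead_coef p %| resultant p^`() p)%Z.
Proof.
move=> hp.
have hq : size p^`() = (size p).-1 by rewrite size_derivZ // ltnW // ltnW.
have hj : ((((size p).-1 + (size p^`()).-1).-1) < (size p).-1 + (size p^`()).-1)%N.
  by rewrite prednK // hq; move/ssrnat.leP: hp => hp; apply/ssrnat.ltP; rewrite -?subn1 -?minusE -?plusE; lia.
rewrite /resultant (expand_det_col _ (Ordinal hj)); apply: rpred_sum => i _.
have ej : (Ordinal hj : nat) = ((size p).-1 + (size p^`()).-1).-1 := erefl.
apply: dvdz_mulr; rewrite Sylvester_mxE ej.
move/ssrnat.leP: hp => hp.
have hq' : (size p^`()).-1 = ((size p).-1 - 1)%N by rewrite hq subn1.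
case: splitP => k hk.
  rewrite coef_deriv; apply: dvdz_mulrn; apply: dvdz_mulrn.
  apply: lead_dvd_high; rewrite hq'.
  move: (ltn_ord k); move: (nat_of_ord k) => kk.
  rewrite -!subn1 -?minusE => /ssrnat.leP hk'; apply/ssrnat.leP.
  rewrite -?subn1 -?minusE -?plusE; lia.
apply: dvdz_mulrn; apply: lead_dvd_high.
move: (ltn_ord k); move: (nat_of_ord k) => kk.
rewrite !hq' -!subn1 -?minusE => /ssrnat.leP hk'; apply/ssrnat.leP.
rewrite -?subn1 -?minusE -?plusE; lia.
Qed.
Lemma deriv_root_neq0 (C : numClosedFieldType) (p : {poly int}) (b : C) :
  (1 < size p)%N ->
  irreducible_poly (map_poly (intr : int -> rat) p) ->
  root (map_poly (intr : int -> C) p) b ->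
  (map_poly (intr : int -> C) p)^`().[b] != 0.
Proof.
move=> hsz [_ hirr] hb.
set pQ := map_poly (intr : int -> rat) p.
have hsQ : size pQ = size p by rewrite size_map_inj_poly //; apply: intr_inj.
have hdQ : pQ^`() != 0.
  rewrite /pQ deriv_map -size_poly_eq0 size_map_inj_poly //; last exact: intr_inj.
  by rewrite size_derivZ ?(ltnW hsz) // -lt0n -subn1 subn_gt0.
have hcop : coprimep pQ pQ^`().
  apply/negPn/negP => hg.
  have := hirr _ hg (dvdp_gcdl _ _) => heq.
  have : pQ %| pQ^`() by rewrite -(eqp_dvdl _ heq) dvdp_gcdr.
  move/(dvdp_leq hdQ); rewrite leqNgt lt_size_deriv //.
  by rewrite -size_poly_eq0 hsQ -lt0n (ltnW hsz).
have [[u v] /= huv] := Bezout_eq1_coprimepP _ _ hcop.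
have hmap : map_poly (ratr : rat -> C) pQ = map_poly (intr : int -> C) p.
  by rewrite -map_poly_comp; apply: eq_map_poly => x /=; rewrite ratr_int.
have := congr1 (fun P => (map_poly (ratr : rat -> C) P).[b]) huv => /=.
rewrite rmorphD !rmorphM /= hmap -deriv_map hmap rmorph1 hornerD !hornerM.
rewrite (rootP hb) mulr0 add0r hornerC => h.
by apply/negP => /eqP h0; move: h; rewrite h0 mulr0 => /eqP; rewrite eq_sym oner_eq0.
Qed.
Lemma disc_bound (C : numClosedFieldType) (p : {poly int}) :
  (2 < size p)%N -> irreducible_poly (map_poly (intr : int -> rat) p) ->
  exists beta : 'I_(size p).-1 -> C,
   (forall i, root (map_poly (intr : int -> C) p) (beta i)) /\
   1 <= `|(lead_coef p)%:~R : C| ^+ (2 * (size p).-1 - 2) *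
          \prod_i \prod_(j | j != i) `|beta i - beta j|.
Proof.
move=> hsz hirr.
set N := (size p).-1.
set pC := map_poly (intr : int -> C) p.
have hsC : size pC = size p by rewrite size_map_inj_poly //; apply: intr_inj.
have hlC : lead_coef pC = (lead_coef p)%:~R by rewrite lead_coef_map_inj //; apply: intr_inj.
have hp0 : p != 0 by rewrite -size_poly_eq0 -lt0n (ltn_trans _ hsz).
have ha0 : (lead_coef p)%:~R != 0 :> C by rewrite intr_eq0 lead_coef_eq0.
have [r hr] := closed_field_poly_normal pC.
have hsr : size r = N.
  have := congr1 (fun q : {poly C} => size q) hr; rewrite size_scale ?hlC // (size_prod_XsubC _ id) hsC /=.
  by rewrite /N; move=> ->.
pose beta (i : 'I_N) := r`_i.
have hfac : pC = (lead_coef p)%:~R *: \prod_(i < N) ('X - (beta i)%:P).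
  by rewrite {1}hr hlC (big_nth 0) hsr big_mkord.
have hroot : forall i, root pC (beta i).
  move=> i; rewrite /root hfac hornerZ horner_prod (bigD1 i) //= hornerXsubC subrr.
  by rewrite mul0r mulr0.
exists beta; split => //.
set aC : C := (lead_coef p)%:~R.
have hder : forall i, pC^`().[beta i] = aC * \prod_(j | j != i) (beta i - beta j).
  by move=> i; rewrite {1}hfac deriv_root.
have hne : forall i, pC^`().[beta i] != 0.
  by move=> i; apply: deriv_root_neq0 (ltnW hsz) hirr (hroot i).
have hinj : forall i j, j != i -> beta i - beta j != 0.
  move=> i j hji; move: (hne i); rewrite hder mulf_eq0 negb_or => /andP[_].
  by rewrite (bigD1 j) //= mulf_eq0 negb_or => /andP[].
have hV : \det (Vandermonde N (\row_i beta i)) != 0.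
  rewrite det_Vandermonde; apply/prodf_neq0 => i _; apply/prodf_neq0 => j hij.
  by rewrite !mxE; apply: hinj; rewrite neq_ltn hij.
have hq : size p^`() = N by rewrite size_derivZ // ltnW // ltnW.
have hsC' : size pC = N.+1 by rewrite hsC /N prednK // ltnW // ltnW.
have hQ : (size pC^`() <= (size p^`()).-1.+1)%N.
  by rewrite /pC deriv_map size_map_inj_poly //; [exact: leqSpred | exact: intr_inj].
have hS : forall i j, map_mx (intr : int -> C) (Sylvester_mx p^`() p) i j =
   match split i with
   | inl k => pC^`()`_(j - k) *+ (k <= j) | inr k => pC`_(j - k) *+ (k <= j) end.
  move=> i j; rewrite mxE Sylvester_mxE; case: split => k;
  by rewrite rmorphMn /= /pC ?deriv_map coef_map.
have hdet := @sylv_det C _ _ _ _ _ beta hsC' hQ hS hroot.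
rewrite det_map_mx hlC -/aC in hdet.
have hR : (resultant p^`() p)%:~R = aC ^+ (size p^`()).-1 *
     \prod_i (aC * \prod_(j | j != i) (beta i - beta j)) :> C.
  apply: (mulIf hV); rewrite hdet [RHS]mulrC mulrA [_ * aC ^+ _]mulrC mulrA [aC ^+ _ * _]mulrC; congr (_ * _).
  by apply: eq_bigr => i _; rewrite hder.
set P := \prod_i \prod_(j | j != i) `|beta i - beta j|.
set R := resultant p^`() p in hR *.
have hm : (size p^`()).-1 = N.-1 by rewrite hq.
have hnorm : `|R%:~R : C| = `|aC| ^+ N.-1 * (`|aC| ^+ N * P).
  rewrite hR normrM normrX hm normr_prod.
  under eq_bigr => i _ do rewrite normrM normr_prod.
  by rewrite big_split /= prodr_const card_ord.
have hR0 : R != 0.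
  rewrite -(intr_eq0 C) hR; apply: mulf_neq0; first exact: expf_neq0.
  by apply/prodf_neq0 => i _; rewrite -hder.
have hdvd := @res_dvd p hsz.
set D := (R %/ lead_coef p)%Z.
have hRD : R = D * lead_coef p by rewrite divzK.
have hD0 : D != 0 by apply: contraNneq hR0 => hD; rewrite hRD hD mul0r.
have hD1 : 1 <= `|D%:~R : C|.
  by rewrite -intr_norm ler1z; rewrite -normr_gt0 in hD0; exact: hD0.
have haR : `|aC| <= `|R%:~R : C|.
  rewrite hRD rmorphM normrM -{1}[`|aC|]mul1r; apply: ler_wpM2r => //.
have hN : (1 < N)%N by rewrite /N -ltnS prednK // ltnW // ltnW.
have hexp : (N.-1 + N = 1 + (2 * N - 2))%N.
  move/ssrnat.ltP: hN => hN'; rewrite -?subn1 -?minusE -?plusE -?multE; lia.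
move: haR; rewrite hnorm mulrA -exprD hexp exprD expr1 -mulrA.
rewrite -{1}[`|aC|]mulr1 ler_pM2l //; by rewrite normr_gt0.
Qed.
Theorem mainTheorem6 (C : numClosedFieldType) (n : nat) (hn : (2 <= n)%N)
  (xi : C) (hxi : xi \is Num.real) (alpha : C) (p : {poly int})
  (hp : minpolyZ p alpha) (hdeg : size p = n.+1) :
  exists2 beta : C, root (map_poly (intr : int -> C) p) beta &
    2^-1 * ((n.-root ((heightZ p)%:~R : C)) ^+ 2)^-1 <= `|xi - beta|.
Proof.
case: hp => _ hirr _.
have hsz : (2 < size p)%N by rewrite hdeg ltnS.
have [beta [hroot hbound]] := @disc_bound C p hsz hirr.
have eN : (size p).-1 = n by rewrite hdeg.
have hn0 : (0 < n)%N by rewrite (leq_trans _ hn).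
set H : C := (heightZ p)%:~R.
set rt := n.-root H.
set K := (rt ^+ 2)^-1.
set c := 2^-1 * K.
have haH : `|(lead_coef p)%:~R : C| <= H.
  rewrite -intr_norm ler_int /heightZ lead_coefE.
  have hi : ((size p).-1 < size p)%N by rewrite hdeg.
  exact: (le_bigmax 0 (fun i : 'I_(size p) => `|p`_i|) (Ordinal hi)).
have hp0 : p != 0 by rewrite -size_poly_eq0 hdeg.
have ha0 : 0 < `|(lead_coef p)%:~R : C| by rewrite normr_gt0 intr_eq0 lead_coef_eq0.
have hH0 : 0 < H := lt_le_trans ha0 haH.
have hrt0 : 0 < rt by rewrite /rt rootC_gt0.
have hK0 : 0 < K by rewrite /K invr_gt0 exprn_gt0.
have hc0 : 0 <= c.
  by apply: mulr_ge0; [rewrite invr_ge0 | exact: ltW].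
have hcc : c + c = K by rewrite /c mulrC -splitr.
case: (boolP [exists i, c <= `|xi - beta i|]).
  by case/existsP => i hi; exists (beta i).
rewrite negb_exists => /forallP hall.
have hlt : forall i, `|xi - beta i| < c.
  move=> i; rewrite real_ltNge ?hall ?normr_real ?ger0_real //.
have hdist : forall i j, j != i -> `|beta i - beta j| < K.
  move=> i j _; rewrite -hcc; apply: le_lt_trans (ler_distD xi _ _) _.
  by rewrite distrC; apply: ltrD; rewrite // distrC.
have hN2 : (1 < (size p).-1)%N by rewrite eN.
pose i0 : 'I_((size p).-1) := Ordinal (ltn_trans (ltnSn 0) hN2).
pose i1 : 'I_((size p).-1) := Ordinal hN2.
have hprod : \prod_i \prod_(j | j != i) `|beta i - beta j| <
             \prod_(i : 'I_((size p).-1)) \prod_(j | j != i) K.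
  apply: ltr_prod; first by apply/hasP; exists i0; rewrite ?mem_index_enum.
  move=> i _; apply/andP; split.
    by apply: prodr_ge0 => j _; rewrite normr_ge0.
  apply: ltr_prod; last first.
    by move=> j hj; rewrite normr_ge0 hdist.
  apply/hasP; case: (eqVneq i i0) => [->|h].
    by exists i1; rewrite ?mem_index_enum // -val_eqE.
  by exists i0; rewrite ?mem_index_enum // eq_sym.
have hKprod : \prod_(i : 'I_((size p).-1)) \prod_(j | j != i) K = (K ^+ n.-1) ^+ n.
  under eq_bigr => i _ do rewrite prodr_const cardC1 card_ord eN.
  by rewrite prodr_const card_ord eN.
have he : (2 * (size p).-1 - 2 = 2 * n.-1)%N by rewrite eN -subn1 mulnBr muln1.
have hfin : `|(lead_coef p)%:~R : C| ^+ (2 * (size p).-1 - 2) *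
            \prod_(i : 'I_((size p).-1)) \prod_(j | j != i) K <= 1.
  rewrite hKprod he exprM [K ^+ _ ^+ _]exprAC -exprMn; apply: exprn_ile1.
    by rewrite mulr_ge0 ?exprn_ge0 ?normr_ge0 // ltW.
  rewrite /K -exprVn exprAC exprVn (rootCK hn0) -/H exprVn.
  rewrite -[X in _ <= X](mulfV (expf_neq0 2 (lt0r_neq0 hH0))) ler_wpM2r //.
    by rewrite invr_ge0 exprn_ge0 // (ltW hH0).
  by rewrite !expr2 ler_pM ?normr_ge0.
have h2 : `|(lead_coef p)%:~R : C| ^+ (2 * (size p).-1 - 2) *
            \prod_i \prod_(j | j != i) `|beta i - beta j| <
          `|(lead_coef p)%:~R : C| ^+ (2 * (size p).-1 - 2) *
            \prod_(i : 'I_((size p).-1)) \prod_(j | j != i) K.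
  by rewrite ltr_pM2l // exprn_gt0.
by have := lt_le_trans (le_lt_trans hbound h2) hfin; rewrite ltxx.
Qed.
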